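(* Let $(G,T,c)$ be a tree instance satisfying the standing assumptions below, rooted at a terminal $r\in T$. Let $e=(u,v)\in E$, and let $f$ be a blocking flow in $I(e)$ such that $f(e)=\max\Psi(e)$. Then $\mathcal{X}=\{V_f(t): t\in T_e\cup\{u\}\}$ is a cut-system in $I(e)$, i.e. a family of pairwise disjoint $t$-sets, one for each $t\in T_e\cup\{u\}$. Moreover, \[2\alpha(f)=f(e)+\sum_{t\in T_e}f(e_t)=\gamma(\mathcal{X})-\kappa(\mathcal{X}).\] Consequently $f$ is a maximum feasible flow in $I(e)$.
   Context: Instance and standing assumptions. $G=(V,E)$ is a finite tree, $T\subseteq V$ is a set of terminals and $c:E\to\mathbb{Z}^+$, where $\mathbb{Z}^+$ denotes the nonnegative integers. We assume that $T$ is exactly the set of leaves of $G$, every non-leaf vertex has degree $3$, and $c(e)\ge1$ for all $e\in E$. For a leaf $t$, $e_t$ is the edge incident to $t$. For vertices $x,y$, $P_{x,y}$ is the path between them. Notation in a graph $H$. For $X\subseteq V(H)$, $E(X)$ is the set of edges of $H$ with exactly one end in $X$. For $h:E\to\mathbb{Z}^+$ we write $h(X)=\sum_{e\in E(X)}h(e)$. Flows. For a tree $H$ with terminal set $S$, a flow is a function $f:E(H)\to\mathbb{Z}^+$ for which there exists $g$, assigning to each unordered pair of distinct $s,s'\in S$ a value $g(s,s')\in\mathbb{Z}^+$, with $f(e)=\sum\{g(s,s'): e\in E(P_{s,s'})\}$ for all $e$. Such a $g$ is a decomposition of $f$. The flow is feasible if $f\le c$. Its value is $\alpha(f)=\frac12\sum_{s\in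 S}f(\{s\})$. A feasible flow is maximum if it maximizes $\alpha$ among feasible flows of the instance. Rooted notions. $G$ is rooted at $r$; an edge is written $(x,y)$ with $x$ the parent of $y$. For a connected $Y\subseteq V\setminus\{r\}$, the parent-edge of $Y$ is the unique edge $(x,y)\in E(Y)$ with $y\in Y$ and $x$ the parent of $y$; the other edges of $E(Y)$ are child-edges of $Y$. For an edge $e=(u,v)$: $V_e$ consists of $u$, $v$ and all descendants of $v$; $G_e=(V_e,E_e)$ is the subgraph induced by $V_e$; $T_e=(T\cap V_e)\setminus\{u\}$; and $I(e)=(G_e,T_e\cup\{u\},c)$ is an instance in which $u$ is also a terminal. In $I(e)$, $E(\cdot)$ and $c(\cdot)$ refer to $G_e$. A $t$-set in $I(e)$ is a vertex set $X\subseteq V_e$ inducing a connected subgraph with $X\cap(T_e\cup\{u\})=\{t\}$. Odd sets. For a family $\mathcal{X}$ of pairwise disjoint vertex sets of $G_e$, an odd set is the vertex set $W$ of a connected component of $G_e-\bigcup_{X\in\mathcal{X}}X$ with $c(W)$ odd. For $X\in\mathcal{X}$, $\mathrm{odd}(X)$ is the family of odd sets whose parent-edge is a child-edge of $X$. We write $\gamma(\mathcal{X})=\sum_{X\in\mathcal{X}}c(X)$, and $\kappa(\mathcal{X})$ for the number of odd sets of $\mathcal{X}$. A set $X\in\mathcal{X}$ with $X\cap T_e=\{t\}$ is blocked by $f$ if $f(e_t)=f(X)=c(X)-|\mathrm{odd}(X)|$. Reachable sets. For a feasible flow $f$ in $I(e)$ and $s\in V_e$, $V_f(s)$ is the set of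 vertices $w\in V_e$ such that, with $w'$ the lowest common ancestor of $s$ and $w$: every edge $e'$ on $P_{s,w'}$ satisfies $c(e')-f(e')\ge1$, and every edge $e'$ on $P_{w',w}$ satisfies $c(e')-f(e')\ge2$. Blocking flows. A feasible flow $f$ in $I(e)$ is blocking if $\{V_f(t): t\in T_e\}$ is a family of pairwise disjoint $t$-sets, one for each $t\in T_e$, all blocked by $f$, with odd sets taken with respect to this family. $\Psi(e)$ is the set of integers $x$ such that $I(e)$ has a blocking flow $f$ with $f(e)=x$. *)

(* Defs.v *)
From mathcomp Require Import all_boot.
Set Implicit Arguments. Unset Strict Implicit. Unset Printing Implicit Defensive.

Section TreeInstance.
Variable V : finType.
Variable par : V -> V.   (* par x = parent of x in the tree rooted at r *)
Variable r : V.

Definition anc (x y : V) : bool := fconnect par y x.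

(* the edges of G are the pairs {par z, z} for z <> r; the edge (par z, z)
   is identified with its child end z. *)
Definition is_rooted_tree : Prop := par r = r /\ forall y, anc r y.

Definition children (x : V) : {set V} := [set y | (y != r) && (par y == x)].
Definition deg (x : V) : nat := #|children x| + (x != r).

Definition standing (T : {set V}) (c : V -> nat) : Prop :=
  [/\ forall x, (x \in T) = (deg x == 1),
      forall x, x \notin T -> deg x = 3 &
      forall z, z != r -> 0 < c z].

(* the edge z (i.e. (par z, z)) lies on the path P_{x,y} *)
Definition on_path (x y z : V) : bool := anc z x (+) anc z y.

(* ---- the instance I(e), e = (u, v) with u = par v ---- *)
Variable v : V.

Definition Ee : {set V} := [set z | anc v z].        (* edges of G_e *)
Definition Ve : {set V} := par v |: Ee.
Definition Te (T : {set V}) : {set V} :=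
  [set t in T | (t \in Ve) && (t != par v)].
Definition Sterm (T : {set V}) : {set V} := par v |: Te T.

Definition cutE (X : {set V}) (h : V -> nat) : nat :=
  \sum_(z in Ee | (par z \in X) (+) (z \in X)) h z.

(* f is a flow in I(e): it has a decomposition g over unordered pairs
   (2-element subsets) of terminals of I(e) *)
Definition is_flow (T : {set V}) (f : V -> nat) : Prop :=
  exists g : {set V} -> nat, forall z, z \in Ee ->
    f z = \sum_(P : {set V} | [&& P \subset Sterm T, #|P| == 2 &
                 [exists s in P, exists s' in P, on_path s s' z]]) g P.

Definition feasible (T : {set V}) (c f : V -> nat) : Prop :=
  is_flow T f /\ forall z, z \in Ee -> f z <= c z.

(* 2 * alpha(f) *)
Definition alpha2 (T : {set V}) (f : V -> nat) : nat :=
  \sum_(s in Sterm T) cutE [set s] f.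

Definition adjE (a b : V) : bool :=
  ((b \in Ee) && (par b == a)) || ((a \in Ee) && (par a == b)).

Definition induced (X : {set V}) : rel V :=
  fun a b => [&& a \in X, b \in X & adjE a b].

Definition connected_in (X : {set V}) : Prop :=
  forall x y, x \in X -> y \in X -> connect (induced X) x y.

Definition tset (T : {set V}) (X : {set V}) (t : V) : Prop :=
  [/\ X \subset Ve, connected_in X & X :&: Sterm T = [set t]].

Definition family (I : {set V}) (F : V -> {set V}) : {set {set V}} :=
  [set F t | t in I].
Definition rest (I : {set V}) (F : V -> {set V}) : {set V} :=
  Ve :\: \bigcup_(X in family I F) X.
Definition comp (I : {set V}) (F : V -> {set V}) (w : V) : {set V} :=
  [set w' | connect (induced (rest I F)) w w'].
Definition oddsets (I : {set V}) (F : V -> {set V}) (c : V -> nat)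
  : {set {set V}} :=
  [set W in [set comp I F w | w in rest I F] | odd (cutE W c)].

Definition gamma (I : {set V}) (F : V -> {set V}) (c : V -> nat) : nat :=
  \sum_(X in family I F) cutE X c.
Definition kappa (I : {set V}) (F : V -> {set V}) (c : V -> nat) : nat :=
  #|oddsets I F c|.

Definition parent_edge (Y : {set V}) (z : V) : bool :=
  [&& z \in Y, par z \notin Y & z != r].
Definition child_edge (X : {set V}) (z : V) : bool :=
  [&& z \in Ee, (par z \in X) (+) (z \in X) & ~~ parent_edge X z].
Definition oddX (I : {set V}) (F : V -> {set V}) (c : V -> nat)
  (X : {set V}) : {set {set V}} :=
  [set W in oddsets I F c | [exists z, parent_edge W z && child_edge X z]].

Definition is_lca (s w a : V) : bool :=
  [&& anc a s, anc a w & [forall b, (anc b s && anc b w) ==> anc b a]].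
Definition Vf (c f : V -> nat) (s : V) : {set V} :=
  [set w in Ve | [exists a, is_lca s w a &&
     [forall z, (on_path s a z ==> (f z + 1 <= c z)) &&
                (on_path a w z ==> (f z + 2 <= c z))]]].

(* X (with X ∩ T_e = {t}) is blocked by f; the edge e_t is (par t, t),
   i.e. f(e_t) = f t; odd sets w.r.t. the family {V_f(t) : t in T_e}. *)
Definition blocked (T : {set V}) (c f : V -> nat) (X : {set V}) (t : V)
  : Prop :=
  f t = cutE X f /\
  cutE X f + #|oddX (Te T) (Vf c f) c X| = cutE X c.

Definition blocking (T : {set V}) (c f : V -> nat) : Prop :=
  [/\ feasible T c f,
      forall t, t \in Te T -> tset T (Vf c f t) t,
      forall t t', t \in Te T -> t' \in Te T -> t != t' ->
                   [disjoint Vf c f t & Vf c f t'] &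
      forall t, t \in Te T -> Vf c f t :&: Te T = [set t] /\
                              blocked T c f (Vf c f t) t].

End TreeInstance.

(* Main.v *)
Require Import Defs.
From mathcomp Require Import all_boot.
From mathcomp Require Import zify.
Set Implicit Arguments. Unset Strict Implicit. Unset Printing Implicit Defensive.

Section Tree.
Variable V : finType.
Variable par : V -> V.
Variable r : V.
Hypothesis Htree : is_rooted_tree par r.

Local Notation anc := (anc par).

Lemma ancP x y : reflect (exists n, iter n par y = x) (anc x y).
Proof.
apply: (iffP idP) => [H|[n <-]]; last exact: fconnect_iter.
by exists (findex par y x); apply: iter_findex.
Qed.

Lemma anc_refl x : anc x x. Proof. exact: connect0. Qed.
Lemma anc_par x : anc (par x) x. Proof. exact: fconnect1. Qed.
Lemma anc_trans x y z : anc x y -> anc y z -> anc x z.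
Proof. rewrite /Defs.anc => H1 H2; exact: connect_trans H2 H1. Qed.

Lemma anc_cases x y : anc x y -> x = y \/ anc x (par y).
Proof.
case/ancP => [[|n]] <-; first by left.
by right; rewrite iterSr; apply/ancP; exists n.
Qed.

Lemma anc_casesE x y : anc x y = (x == y) || anc x (par y).
Proof.
apply/idP/orP => [/anc_cases [->|H]|[/eqP->|H]]; [by left| by right| exact: anc_refl|].
exact: anc_trans H (anc_par y).
Qed.

Lemma iter_r n : iter n par r = r.
Proof. by apply: iter_fix; case: Htree. Qed.

Lemma anc_r x : anc x r -> x = r.
Proof. by case/ancP => n <-; rewrite iter_r. Qed.

Lemma r_anc x : anc r x.
Proof. by case: Htree. Qed.

Lemma cyc n y : iter n.+1 par y = y -> y = r.
Proof.
move=> H.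
have Hk k : iter (k * n.+1) par y = y.
  by elim: k => [//|k IH]; rewrite mulSn iterD IH H.
case/ancP: (r_anc y) => p Hp.
have := Hk p; rewrite mulnS addnC iterD Hp iter_r => ->; done.
Qed.

Lemma anc_antisym x y : anc x y -> anc y x -> x = y.
Proof.
case/ancP => a Ha; case/ancP => b Hb.
case: a Ha => [|a] Ha; first by [].
have : iter (a.+1 + b) par x = x by rewrite iterD Hb.
by rewrite addSn => /cyc Hx; rewrite -Hb Hx iter_r.
Qed.

Lemma par_fix x : par x = x -> x = r.
Proof. by move=> H; apply: (@cyc 0). Qed.

Lemma anc_self_par x : anc x (par x) -> x = r.
Proof. by move=> H; apply: par_fix; rewrite -(anc_antisym H (anc_par x)). Qed.

Lemma anc_total a b y : anc a y -> anc b y -> anc a b || anc b a.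
Proof.
case/ancP => i <-; case/ancP => j <-.
case: (leqP i j) => H.
  by apply/orP; right; apply/ancP; exists (j - i); rewrite -iterD subnK.
by apply/orP; left; apply/ancP; exists (i - j); rewrite -iterD subnK // ltnW.
Qed.


Variable v : V.
Hypothesis Hv : v != r.
Local Notation u := (par v).
Local Notation Ee := (Ee par v).
Local Notation Ve := (Ve par v).

Lemma EeE z : (z \in Ee) = anc v z. Proof. by rewrite inE. Qed.
Lemma VeE z : (z \in Ve) = (z == u) || anc v z. Proof. by rewrite !inE. Qed.

Lemma Ee_neq_r z : z \in Ee -> z != r.
Proof. rewrite EeE => H; apply/eqP => E; subst z; move/eqP: Hv; apply; exact: anc_r. Qed.

Lemma Ee_Ve z : z \in Ee -> z \in Ve.
Proof. by rewrite !inE => ->; rewrite orbT. Qed.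

Lemma u_Ee : u \notin Ee.
Proof.
rewrite EeE; apply/negP => H; move/eqP: Hv; apply; exact: anc_self_par.
Qed.

Lemma v_Ee : v \in Ee. Proof. by rewrite EeE anc_refl. Qed.

Lemma u_Ve : u \in Ve. Proof. by rewrite !inE eqxx. Qed.

Lemma Ee_par z : z \in Ee -> par z \in Ve.
Proof.
rewrite EeE => /anc_cases [<-|H]; first exact: u_Ve.
by apply: Ee_Ve; rewrite EeE.
Qed.

Lemma Ve_anc_u w : w \in Ve -> anc u w.
Proof.
rewrite VeE => /orP [/eqP->|H]; first exact: anc_refl.
exact: anc_trans (anc_par v) H.
Qed.

Lemma Ee_nanc_u z : z \in Ee -> ~~ anc z u.
Proof.
rewrite EeE => H; apply/negP => H2; have := anc_trans H H2.
by move=> H3; move/negP: u_Ee; apply; rewrite EeE.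
Qed.

Lemma Ve_Ee w : w \in Ve -> w != u -> w \in Ee.
Proof. by rewrite VeE EeE => /orP [->|]. Qed.

Lemma anc_Ve z y : y \in Ve -> anc z y -> (z \in Ee) || anc z u.
Proof.
rewrite VeE => /orP [/eqP->|Hy] Hz; first by rewrite Hz orbT.
case/orP: (anc_total Hz Hy) => H.
  case/anc_cases: H => [->|H]; first by rewrite EeE anc_refl.
  by rewrite H orbT.
by rewrite EeE H.
Qed.

Lemma anc_Ve_u a y : y \in Ve -> anc a y -> anc u a -> a \in Ve.
Proof.
move=> Hy Ha Hua; case/orP: (anc_Ve Hy Ha) => [/Ee_Ve//|H].
by rewrite (anc_antisym H Hua) u_Ve.
Qed.

Local Notation is_lca := (is_lca par).
Local Notation on_path := (on_path par).

Lemma lcaP s w a : reflect [/\ anc a s, anc a w & forall b, anc b s -> anc b w -> anc b a]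
  (is_lca s w a).
Proof.
apply: (iffP and3P) => [[H1 H2 /forallP H3]|[H1 H2 H3]]; split => //.
  by move=> b Hb1 Hb2; have := H3 b; rewrite Hb1 Hb2.
by apply/forallP => b; apply/implyP => /andP [] ; exact: H3.
Qed.

Lemma lca_unique s w a b : is_lca s w a -> is_lca s w b -> a = b.
Proof.
case/lcaP => Ha1 Ha2 Ha3; case/lcaP => Hb1 Hb2 Hb3.
apply: anc_antisym; [exact: Hb3|exact: Ha3].
Qed.

Lemma lca_anc s w : anc w s -> is_lca s w w.
Proof. by move=> H; apply/lcaP; split => //; exact: anc_refl. Qed.

Lemma lca_anc' s w : anc s w -> is_lca s w s.
Proof. by move=> H; apply/lcaP; split => //; exact: anc_refl. Qed.

Lemma lca_u_Ve s w a : s \in Ve -> w \in Ve -> is_lca s w a -> anc u a /\ a \in Ve.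
Proof.
move=> Hs Hw /lcaP [H1 H2 H3].
have Hu : anc u a by apply: H3; exact: Ve_anc_u.
by split => //; exact: anc_Ve_u Hs H1 Hu.
Qed.

Section VfSec.
Variables c f : V -> nat.
Local Notation Vf := (Vf par v c f).

Lemma VfP s w : reflect (w \in Ve /\ exists a, [/\ is_lca s w a,
   (forall z, on_path s a z -> f z + 1 <= c z) &
   (forall z, on_path a w z -> f z + 2 <= c z)]) (w \in Vf s).
Proof.
rewrite /Defs.Vf in_set; apply: (iffP andP) => [[Hw /existsP [a /andP [Hl /forallP H]]]|[Hw [a [Hl H1 H2]]]].
  split => //; exists a; split => // z Hz; have /andP[A B] := H z.
    exact: (implyP A).
  exact: (implyP B).
split => //; apply/existsP; exists a; rewrite Hl; apply/forallP => z.
by apply/andP; split; apply/implyP; [exact: H1|exact: H2].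
Qed.

Lemma on_path_refl x z : on_path x x z = false.
Proof. by rewrite /Defs.on_path addbb. Qed.

Lemma Vf_self s : s \in Ve -> s \in Vf s.
Proof.
move=> Hs; apply/VfP; split => //; exists s; split => [|z|z]; rewrite ?on_path_refl //.
exact: lca_anc (anc_refl s).
Qed.

Lemma Vf_u w : reflect (w \in Ve /\ forall z, anc z w -> ~~ anc z u -> f z + 2 <= c z)
  (w \in Vf u).
Proof.
apply: (iffP (VfP u w)) => [[Hw [a [Hl H1 H2]]]|[Hw H]].
  split => // z Hz Hzu.
  have Ea : a = u by apply: (lca_unique Hl); apply: lca_anc'; exact: Ve_anc_u.
  subst a; apply: H2; by rewrite /Defs.on_path Hz (negbTE Hzu).
split => //; exists u; split => [|z|z]; rewrite ?on_path_refl //.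
  by apply: lca_anc'; exact: Ve_anc_u.
rewrite /Defs.on_path; case Hzu: (anc z u) => /= Hz.
  by move: Hz; rewrite (anc_trans Hzu (Ve_anc_u Hw)).
by apply: H => //; rewrite Hzu.
Qed.

Lemma onpE x y z : on_path x y z = anc z x (+) anc z y. Proof. by []. Qed.

Lemma PC1 s w a z : s \in Ve -> w \in Ve -> is_lca s w a ->
  (forall z, on_path s a z -> f z + 1 <= c z) ->
  anc z s -> ~~ anc z a -> z \in Vf s.
Proof.
move=> Hs Hw Hl H1 Hzs Hza.
have [Hua HaVe] := lca_u_Ve Hs Hw Hl.
case/lcaP: Hl => Has Haw Hl3.
apply/VfP; split.
  case/orP: (anc_Ve Hs Hzs) => [/Ee_Ve //|Hzu].
  by move: Hza; rewrite (anc_trans Hzu Hua).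
exists z; split => [|z'|z']; rewrite ?on_path_refl //; first exact: lca_anc.
rewrite onpE; case Hz'z: (anc z' z); first by rewrite (anc_trans Hz'z Hzs).
rewrite addbF => Hz's; apply: H1; rewrite onpE Hz's /=.
apply/negP => Hz'a.
case/orP: (anc_total Hzs Has) => H; first by rewrite H in Hza.
by rewrite (anc_trans Hz'a H) in Hz'z.
Qed.

Lemma PC2 s w a z : s \in Ve -> w \in Ve -> is_lca s w a ->
  (forall z, on_path s a z -> f z + 1 <= c z) ->
  (forall z, on_path a w z -> f z + 2 <= c z) ->
  anc z w -> ~~ anc z a -> z \in Vf s.
Proof.
move=> Hs Hw Hl H1 H2 Hzw Hza.
have [Hua HaVe] := lca_u_Ve Hs Hw Hl.
case/lcaP: Hl => Has Haw Hl3.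
have Haz : anc a z.
  by case/orP: (anc_total Haw Hzw) => // H; rewrite H in Hza.
apply/VfP; split.
  case/orP: (anc_Ve Hw Hzw) => [/Ee_Ve //|Hzu].
  by move: Hza; rewrite (anc_trans Hzu Hua).
exists a; split => // [|z'].
  apply/lcaP; split => // b Hb1 Hb2; apply: Hl3 => //; exact: anc_trans Hb2 Hzw.
rewrite onpE; case Hz'a: (anc z' a); first by rewrite (anc_trans Hz'a Haz).
move=> /= Hz'z; apply: H2; by rewrite onpE Hz'a (anc_trans Hz'z Hzw).
Qed.

Lemma Vf_wit s w a : s \in Ve -> w \in Ve -> is_lca s w a ->
  (forall z, on_path s a z -> f z + 1 <= c z) -> a \in Vf s.
Proof.
move=> Hs Hw Hl H1; have [Hua HaVe] := lca_u_Ve Hs Hw Hl.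
case/lcaP: Hl => Has Haw Hl3.
apply/VfP; split => //; exists a; split => // [|z']; first exact: lca_anc.
by rewrite on_path_refl.
Qed.

Lemma Vf_stepup s z : s \in Ve -> z \in Vf s -> ~~ anc z s -> par z \in Vf s.
Proof.
move=> Hs /VfP [Hz [a [Hl H1 H2]]] Hzs.
have Hl' := Hl; case/lcaP: Hl' => Has Haz Hl3.
case/anc_cases: Haz => [Eaz|Hapz]; first by rewrite -Eaz Has in Hzs.
case: (eqVneq (par z) a) => [->|Hne]; first exact: Vf_wit Hs Hz Hl H1.
apply: (PC2 Hs Hz Hl H1 H2 (anc_par z)).
by apply/negP => H; move/eqP: Hne; apply; exact: anc_antisym.
Qed.

Lemma Vf_ext s z : s \in Ve -> z \in Ee -> par z \in Vf s -> f z + 2 <= c z -> z \in Vf s.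
Proof.
move=> Hs HzE /VfP [Hx [a [Hl H1 H2]]] Hgood.
have Hl' := Hl; case/lcaP: Hl' => Has Hax Hl3.
have Hzr : z != r := Ee_neq_r HzE.
have Hza : ~~ anc z a.
  apply/negP => H; move/eqP: Hzr; apply; apply: anc_self_par; exact: anc_trans H Hax.
case Hzs: (anc z s); first exact: PC1 Hs Hx Hl H1 Hzs Hza.
apply/VfP; split; first exact: Ee_Ve.
exists a; split => // [|z'].
  apply/lcaP; split => //; first exact: anc_trans Hax (anc_par z).
  move=> b Hb1; rewrite anc_casesE => /orP [/eqP Ebz|Hb]; first by rewrite Ebz Hzs in Hb1.
  exact: Hl3.
rewrite onpE (anc_casesE z' z); case: (eqVneq z' z) => [->|Hne] /=.
  by rewrite (negbTE Hza).
by move=> H; apply: H2; rewrite onpE.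
Qed.

Lemma Vf_top t z : t \in Ve -> z \in Ee -> z \in Vf t -> par z \notin Vf t ->
  ~~ (f z + 1 <= c z).
Proof.
move=> Ht HzE Hz Hpz.
have Hzt : anc z t.
  by apply/negP => /negP H; move/negP: Hpz; apply; exact: Vf_stepup.
apply/negP => Hg; move/negP: Hpz; apply.
have Hzz := Hz; case/VfP: Hzz => _ [a [Hl H1 H2]].
have Eaz : a = z by apply: lca_unique Hl (lca_anc Hzt).
subst a.
apply/VfP; split; first exact: Ee_par.
exists (par z); split => [|z'|z']; rewrite ?on_path_refl //.
  by apply: lca_anc; exact: anc_trans (anc_par z) Hzt.
rewrite onpE; case Hz'p: (anc z' (par z)).
  by rewrite (anc_trans Hz'p (anc_trans (anc_par z) Hzt)).
rewrite addbF => Hz't; case: (eqVneq z' z) => [->//|Hne].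
by apply: H1; rewrite onpE Hz't anc_casesE (negbTE Hne) Hz'p.
Qed.

Lemma Vf_meet_u s w : s \in Ve -> w \in Vf u -> w \in Vf s -> u \in Vf s.
Proof.
move=> Hs /Vf_u [Hw Hu] /VfP [_ [a [Hl H1 H2]]].
have Hl' := Hl; case/lcaP: Hl' => Has Haw _.
apply/VfP; split; first exact: u_Ve.
exists u; split => [|z|z]; rewrite ?on_path_refl //.
  by apply: lca_anc; exact: Ve_anc_u.
rewrite onpE; case Hzu: (anc z u); first by rewrite (anc_trans Hzu (Ve_anc_u Hs)).
rewrite addbF => Hzs.
case Hza: (anc z a).
  have := Hu z (anc_trans Hza Haw); rewrite Hzu => /(_ isT) H.
  by apply: leq_trans H; rewrite leq_add2l.
by apply: H1; rewrite onpE Hzs Hza.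
Qed.

Lemma Xu_anc w y : w \in Vf u -> y \in Ve -> anc y w -> y \in Vf u.
Proof.
move=> /Vf_u [Hw H] Hy Hyw; apply/Vf_u; split => // z Hz; apply: H.
exact: anc_trans Hz Hyw.
Qed.

Lemma Xu_par w : w \in Vf u -> w \in Ee -> par w \in Vf u.
Proof. move=> Hw HE; apply: Xu_anc Hw (Ee_par HE) (anc_par w). Qed.

Lemma induced_sym X : symmetric (induced par v X).
Proof.
move=> a b; rewrite /induced /adjE; case: (a \in X); case: (b \in X) => //=; exact: orbC.
Qed.

Lemma Xu_conn_u w : w \in Vf u -> connect (induced par v (Vf u)) u w.
Proof.
move=> Hw; have /Vf_u [HwVe _] := Hw.
have /ancP [n Hn] := Ve_anc_u HwVe.
elim: n w Hw HwVe Hn => [|n IH] w Hw HwVe Hn; first by rewrite -Hn connect0.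
case: (eqVneq w u) => [->|Hne]; first exact: connect0.
have HwE := Ve_Ee HwVe Hne.
have Hpw := Xu_par Hw HwE.
apply: connect_trans (IH (par w) Hpw (Ee_par HwE) _) (connect1 _).
  by rewrite -iterSr.
by rewrite /induced Hpw Hw /adjE HwE eqxx.
Qed.

Lemma Xu_connected : connected_in par v (Vf u).
Proof.
move=> x y Hx Hy; apply: connect_trans (Xu_conn_u Hy).
by rewrite (sym_connect_sym (@induced_sym (Vf u))); exact: Xu_conn_u.
Qed.

End VfSec.


Definition bnd (Y : {set V}) z : bool := (par z \in Y) (+) (z \in Y).

Lemma par0 Y s : s \in Ve ->
  odd (\sum_(z in Ee | anc z s) (bnd Y z : nat)) = (s \in Y) (+) (u \in Y).
Proof.
move=> Hs; have /ancP [n Hn] := Ve_anc_u Hs.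
elim: n s Hs Hn => [|n IH] s Hs Hn.
  rewrite /= in Hn; subst s; rewrite addbb big1 // => z /andP [HzE Hz].
  by move: (Ee_nanc_u HzE); rewrite Hz.
case: (eqVneq s u) => [->|Hne].
  rewrite addbb big1 // => z /andP [HzE Hz].
  by move: (Ee_nanc_u HzE); rewrite Hz.
have HsE := Ve_Ee Hs Hne.
rewrite (bigD1 s) /=; last by rewrite HsE anc_refl.
rewrite (eq_bigl (fun z => (z \in Ee) && anc z (par s))); last first.
  move=> z; case HzE: (z \in Ee) => //=.
  rewrite anc_casesE; case: (eqVneq z s) => [->|_] /=; last by rewrite andbT.
  apply/esym/negP => H.
  by move/eqP: (Ee_neq_r HsE); apply; exact: anc_self_par.
rewrite oddD IH ?Ee_par // -?iterSr //.
by rewrite /bnd; case: (par s \in Y); case: (s \in Y); case: (u \in Y).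
Qed.

Section FlowSec.
Variable T : {set V}.
Variable c : V -> nat.
Hypothesis Hst : standing par r T c.
Local Notation Te := (Te par v T).
Local Notation St := (Sterm par v T).

Definition pairP (P : {set V}) := (P \subset St) && (#|P| == 2).
Definition onP (P : {set V}) z := [exists s in P, exists s' in P, on_path s s' z].
Definition cross (P : {set V}) (Y : {set V}) := \sum_(z in Ee | bnd Y z) (onP P z : nat).

Lemma Te_Ee t : t \in Te -> t \in Ee.
Proof. by rewrite /Defs.Te inE => /and3P [_ H1 H2]; exact: Ve_Ee. Qed.

Lemma Te_T t : t \in Te -> t \in T.
Proof. by rewrite /Defs.Te inE => /and3P []. Qed.

Lemma u_Te : u \notin Te.
Proof. by apply/negP => /Te_Ee; rewrite (negbTE u_Ee). Qed.

Lemma StE s : (s \in St) = (s == u) || (s \in Te).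
Proof. by rewrite /Sterm in_setU1. Qed.

Lemma St_Ve s : s \in St -> s \in Ve.
Proof. by rewrite StE => /orP [/eqP->|/Te_Ee/Ee_Ve]; first exact: u_Ve. Qed.

Lemma leaf t z : t \in Te -> z != r -> par z != t.
Proof.
move=> Ht Hz; case: Hst => Hdeg _ _.
have H1 : deg par r t = 1 by apply/eqP; rewrite -Hdeg Te_T.
move: H1; rewrite /deg (Ee_neq_r (Te_Ee Ht)) addn1 => -[] /eqP; rewrite cards_eq0 => /eqP H.
apply/negP => /eqP E.
have : z \in children par r t by rewrite inE Hz E eqxx.
by rewrite H inE.
Qed.

Definition es s := if s == u then v else s.

Lemma es_Ee s : s \in St -> es s \in Ee.
Proof.
rewrite /es StE; case: (eqVneq s u) => [_|_] /=; first by rewrite EeE anc_refl.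
exact: Te_Ee.
Qed.

Lemma bnd1 s z : s \in St -> z \in Ee -> bnd [set s] z = (z == es s).
Proof.
rewrite StE /bnd /es !in_set1 => Hs HzE.
case: (eqVneq s u) => [->|Hne] /=.
  have -> : (z == u) = false by apply/negP => /eqP E; move: HzE; rewrite E (negbTE u_Ee).
  rewrite addbF; apply/eqP/eqP => [E|->//].
  move: HzE; rewrite EeE => /anc_cases [//|H].
  by move: u_Ee; rewrite -E EeE H.
rewrite (negbTE Hne) /= in Hs; rewrite (negbTE (leaf Hs (Ee_neq_r HzE))) //.
Qed.

Lemma cutE1 h s : s \in St -> cutE par v [set s] h = h (es s).
Proof.
move=> Hs; rewrite /cutE (big_pred1 (es s)) // => z /=.
case HzE: (z \in Ee) => /=; first exact: (bnd1 Hs HzE).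
by apply/esym/negP => /eqP E; move: HzE; rewrite E es_Ee.
Qed.

Lemma onP_pair s s' z : onP [set s; s'] z = on_path s s' z.
Proof.
apply/idP/idP => [/existsP [a /andP [Ha /existsP [b /andP [Hb H]]]]|H].
  rewrite !inE in Ha Hb.
  by case/orP: Ha => /eqP E1; case/orP: Hb => /eqP E2; subst a b;
    rewrite ?on_path_refl // in H; rewrite onpE addbC.
apply/existsP; exists s; rewrite !inE eqxx /=.
by apply/existsP; exists s'; rewrite !inE eqxx orbT.
Qed.

Lemma pairPE P : pairP P -> exists s s', [/\ s \in St, s' \in St, s != s' & P = [set s; s']].
Proof.
case/andP => Hsub /cards2P [s [s' [Hne E]]]; exists s, s'; subst P.
by split => //; apply: (subsetP Hsub); rewrite !inE eqxx ?orbT.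
Qed.

Lemma crossE P Y : cross P Y = cutE par v Y (fun z => (onP P z : nat)).
Proof. by []. Qed.

Lemma xor_nat (a b : bool) : ((a (+) b) : nat) + (a && b).*2 = a + b.
Proof. by case: a; case: b. Qed.

Lemma cross_odd s s' Y : s \in Ve -> s' \in Ve ->
  odd (cross [set s; s'] Y) = (s \in Y) (+) (s' \in Y).
Proof.
move=> Hs Hs'.
have E : cross [set s; s'] Y + (\sum_(z in Ee | bnd Y z) (anc z s && anc z s')).*2 =
   \sum_(z in Ee | anc z s) (bnd Y z : nat) + \sum_(z in Ee | anc z s') (bnd Y z : nat).
  rewrite /cross !big_mkcondr -muln2 big_distrl -!big_split /=.
  apply: eq_bigr => z _; rewrite onP_pair onpE.
  by case: (bnd Y z); case: (anc z s); case: (anc z s').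
have := congr1 odd E; rewrite !oddD odd_double addbF => ->.
by rewrite !par0 // addbACA addbb addbF.
Qed.

Section Flow.
Variable f : V -> nat.
Variable g : {set V} -> nat.
Hypothesis Hg : forall z, z \in Ee ->
    f z = \sum_(P : {set V} | [&& P \subset St, #|P| == 2 &
                 [exists s in P, exists s' in P, on_path s s' z]]) g P.

Lemma cutE_flow (Y : {set V}) : cutE par v Y f = \sum_(P | pairP P) g P * cross P Y.
Proof.
rewrite /cutE.
transitivity (\sum_(z in Ee | bnd Y z) \sum_(P | pairP P) g P * onP P z).
  apply: eq_bigr => z /andP [HzE _]; rewrite Hg // big_mkcond [RHS]big_mkcond /=.
  apply: eq_bigr => P _; rewrite /pairP /onP.
  by case: (P \subset St); case: (#|P| == 2); case: [exists _ in _, _] => //=; rewrite ?muln1 ?muln0.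
rewrite exchange_big /=; apply: eq_bigr => P _; by rewrite /cross big_distrr.
Qed.

Lemma even_sum (I : finType) (Q : pred I) (F : I -> nat) :
  (forall i, Q i -> ~~ odd (F i)) -> ~~ odd (\sum_(i | Q i) F i).
Proof.
move=> H; apply: (big_ind (fun n => ~~ odd n)) => //.
by move=> x y Hx Hy; rewrite oddD (negbTE Hx) (negbTE Hy).
Qed.

Lemma cutE_even (Y : {set V}) : (forall s, s \in St -> s \notin Y) -> ~~ odd (cutE par v Y f).
Proof.
move=> HY; rewrite cutE_flow; apply: even_sum => P /pairPE [s [s' [Hs Hs' _ ->]]].
by rewrite oddM cross_odd ?St_Ve // (negbTE (HY _ Hs)) (negbTE (HY _ Hs')) andbF.
Qed.

End Flow.

End FlowSec.

Section Comp.
Variable I : {set V}.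
Variable F : V -> {set V}.
Local Notation rest := (rest par v I F).
Local Notation cmp := (Defs.comp par v I F).
Local Notation fam := (family I F).

Lemma restP x : reflect (x \in Ve /\ forall s, s \in I -> x \notin F s) (x \in rest).
Proof.
rewrite /rest in_setD andbC; apply: (iffP andP) => [[Hx H]|[Hx H]]; split => //.
  move=> s Hs; apply/negP => Hxs; move/negP: H; apply.
  by apply/bigcupP; exists (F s) => //; apply/imsetP; exists s.
apply/negP => /bigcupP [X /imsetP [s Hs ->]]; apply/negP; exact: H.
Qed.

Lemma rest_Ve x : x \in rest -> x \in Ve.
Proof. by case/restP. Qed.

Lemma connect_in (X : {set V}) x y : connect (induced par v X) x y -> x \in X -> y \in X.
Proof.
case/connectP => p Hp -> {y}; elim: p x Hp => [//|y p IH] x /= /andP [Hxy Hp] Hx.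
by apply: IH Hp _; case/and3P: Hxy.
Qed.

Lemma comp_self w : w \in cmp w.
Proof. by rewrite inE connect0. Qed.

Lemma comp_rest w x : w \in rest -> x \in cmp w -> x \in rest.
Proof. by move=> Hw; rewrite inE => /connect_in; apply. Qed.

Lemma comp_eq w x : x \in cmp w -> cmp x = cmp w.
Proof.
rewrite inE => Hwx; apply/setP => y; rewrite !inE; apply/idP/idP => H.
  exact: connect_trans Hwx H.
rewrite (sym_connect_sym (@induced_sym rest)) in Hwx.
exact: connect_trans Hwx H.
Qed.

Lemma comp_adj x y : x \in rest -> y \in rest -> adjE par v x y -> y \in cmp x.
Proof. by move=> Hx Hy Ha; rewrite inE; apply: connect1; rewrite /induced Hx Hy. Qed.

Lemma comp_top w z y : z \in cmp w -> par z \notin cmp w -> y \in cmp w -> anc z y.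
Proof.
move=> Hz Hpz Hy.
have Ez := comp_eq Hz.
have : connect (induced par v rest) z y by rewrite -Ez in Hy; rewrite inE in Hy.
case/connectP => p Hp ->.
have key : forall p x, x \in cmp w -> anc z x ->
    path (induced par v rest) x p -> anc z (last x p).
  elim => [|y' q IH] x Hx Hzx //= /andP [Hxy Hq].
  case/and3P: Hxy => Hxr Hyr Ha.
  apply: IH Hq; first by rewrite -(comp_eq Hx); apply: comp_adj.
  move: Ha; rewrite /adjE => /orP [/andP [_ /eqP Ey]|/andP [HxE /eqP E]].
    by rewrite -Ey in Hzx; exact: anc_trans Hzx (anc_par y').
  case: (eqVneq x z) => [Exz|Hne].
    subst x; exfalso; move/negP: Hpz; apply; rewrite E -Ez; apply: comp_adj => //.
    by rewrite /adjE HxE E eqxx orbT.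
  by case/anc_cases: Hzx => [Ezx|]; [rewrite Ezx eqxx in Hne|rewrite E].
exact: key Hz (anc_refl z) Hp.
Qed.

Lemma comp_top_uniq w z z' : z \in cmp w -> par z \notin cmp w ->
  z' \in cmp w -> par z' \notin cmp w -> z = z'.
Proof.
move=> H1 H2 H3 H4; apply: anc_antisym; [exact: comp_top H1 H2 H3|exact: comp_top H3 H4 H1].
Qed.

End Comp.

Lemma disjP (A B : {set V}) : reflect (forall x, x \in A -> x \in B -> False) [disjoint A & B].
Proof.
rewrite -setI_eq0; apply: (iffP eqP) => [E x Ha Hb|H].
  have H : x \in A :&: B by rewrite in_setI Ha Hb.
  by rewrite E in_set0 in H.
apply/setP => x; rewrite in_setI in_set0; apply/negP => /andP []; exact: H.
Qed.

Lemma onp_up x y z : anc y x -> on_path x y z -> anc z x /\ ~~ anc z y.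
Proof.
rewrite onpE => Hyx; case Hzy: (anc z y) => H.
  by rewrite (anc_trans Hzy Hyx) in H.
by rewrite addbF in H.
Qed.

Lemma Vf_mono c f f' s w : (forall z, f z <= f' z) -> w \in Vf par v c f' s -> w \in Vf par v c f s.
Proof.
move=> Hle /VfP [Hw [a [Hl H1 H2]]]; apply/VfP; split => //; exists a; split => // z Hz.
  by apply: leq_trans (H1 z Hz); rewrite leq_add2r.
by apply: leq_trans (H2 z Hz); rewrite leq_add2r.
Qed.

Lemma Vf_keep c f f' s w : s \in Ve -> (forall z, z \in Vf par v c f s -> f' z = f z) ->
  w \in Vf par v c f s -> w \in Vf par v c f' s.
Proof.
move=> Hs Heq Hw'; have := Hw'; case/VfP => Hw [a [Hl H1 H2]].
have Hl' := Hl; case/lcaP: Hl' => Has Haw _.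
apply/VfP; split => //; exists a; split => // z; rewrite onpE => Hz.
  have [Hzs Hza] := onp_up Has Hz.
  rewrite Heq; first by apply: H1; rewrite onpE Hzs (negbTE Hza).
  exact: PC1 Hs Hw Hl H1 Hzs Hza.
have [Hzw Hza] : anc z w /\ ~~ anc z a by apply: onp_up Haw _; rewrite onpE addbC.
rewrite Heq; first by apply: H2; rewrite onpE Hzw (negbTE Hza).
exact: PC2 Hs Hw Hl H1 H2 Hzw Hza.
Qed.

Lemma sumb_le1 (I : finType) (A : pred I) (P : pred I) :
  (forall i j, A i -> P i -> A j -> P j -> i = j) -> \sum_(i | A i) (P i : nat) <= 1.
Proof.
move=> H; case: (pickP (fun i => A i && P i)) => [i0 /andP [HA HP]|none].
  rewrite (bigD1 i0) //= HP big1 // => j /andP [Hj Hne].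
  case HPj: (P j) => //; by rewrite (H _ _ HA HP Hj HPj) eqxx in Hne.
rewrite big1 // => j Hj; have := none j; rewrite Hj /=; by case: (P j).
Qed.

Lemma sumb_ge1 (I : finType) (A : pred I) (P : pred I) i0 :
  A i0 -> P i0 -> 1 <= \sum_(i | A i) (P i : nat).
Proof. by move=> HA HP; rewrite (bigD1 i0) //= HP. Qed.

Lemma sumb_eq1 (I : finType) (A : pred I) (P : pred I) i0 :
  A i0 -> P i0 -> (forall j, A j -> P j -> j = i0) -> \sum_(i | A i) (P i : nat) = 1.
Proof.
move=> HA HP H; apply/eqP; rewrite eqn_leq (sumb_ge1 HA HP) andbT.
apply: sumb_le1 => i j Hi Pi Hj Pj; by rewrite (H _ Hi Pi) (H _ Hj Pj).
Qed.

Lemma sumb_eq0 (I : finType) (A : pred I) (P : pred I) :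
  (forall j, A j -> ~~ P j) -> \sum_(i | A i) (P i : nat) = 0.
Proof. by move=> H; rewrite big1 // => j /H /negbTE ->. Qed.

Lemma cutE_exch (A : {set {set V}}) h :
  \sum_(Y in A) cutE par v Y h = \sum_(z in Ee) h z * \sum_(Y in A) (bnd Y z : nat).
Proof.
rewrite /cutE.
under eq_bigr => Y _ do rewrite big_mkcondr /=.
rewrite exchange_big /=; apply: eq_bigr => z _; rewrite big_distrr /=.
by apply: eq_bigr => Y _; rewrite /bnd; case: (_ (+) _); rewrite ?muln1 ?muln0.
Qed.

Section Main.
Variable T : {set V}.
Variables c f : V -> nat.
Hypothesis Hst : standing par r T c.
Hypothesis Hblock : blocking par r v T c f.
Local Notation Te := (Te par v T).
Local Notation St := (Sterm par v T).
Local Notation X := (Vf par v c f).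

Lemma feas : feasible par v T c f.
Proof. by case: Hblock. Qed.

Lemma f_le_c z : z \in Ee -> f z <= c z.
Proof. by case: feas => _; apply. Qed.

Lemma tset_t t : t \in Te -> tset par v T (X t) t.
Proof. by case: Hblock => _ H _ _; apply: H. Qed.

Lemma u_Xt t : t \in Te -> u \notin X t.
Proof.
move=> Ht; case: (tset_t Ht) => _ _ E; apply/negP => H.
have : u \in X t :&: St by rewrite in_setI H /Sterm in_setU1 eqxx.
rewrite E in_set1 => /eqP Eu; move: Ht; rewrite -Eu; apply/negP; exact: u_Te.
Qed.

Lemma disj_u t : t \in Te -> [disjoint X u & X t].
Proof.
move=> Ht; apply/disjP => w H1 H2; move/negP: (u_Xt Ht); apply.
exact: Vf_meet_u (Ee_Ve (Te_Ee Ht)) H1 H2.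
Qed.

Lemma tset_all s : s \in St -> tset par v T (X s) s.
Proof.
rewrite StE => /orP [/eqP->|Ht]; last exact: tset_t.
split; first by apply/subsetP => w /Vf_u [].
  exact: Xu_connected.
apply/setP => y; rewrite in_setI in_set1; case: (eqVneq y u) => [->|Hne].
  by rewrite Vf_self ?u_Ve // /Sterm in_setU1 eqxx.
rewrite StE (negbTE Hne) /=; apply/negP => /andP [H1 H2].
have := disj_u H2; rewrite disjoint_sym => /disjP; apply; last exact: H1.
exact: Vf_self (Ee_Ve (Te_Ee H2)).
Qed.

Lemma disj_all s s' : s \in St -> s' \in St -> s != s' -> [disjoint X s & X s'].
Proof.
rewrite !StE => /orP [/eqP->|Hs] /orP [/eqP->|Hs'] Hne.
- by rewrite eqxx in Hne.
- exact: disj_u.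
- by rewrite disjoint_sym; exact: disj_u.
by case: Hblock => _ _ H _; apply: H.
Qed.

Lemma X_self s : s \in St -> s \in X s.
Proof. by move=> Hs; apply: Vf_self; exact: St_Ve Hs. Qed.

Lemma X_uniq s s' w : s \in St -> s' \in St -> w \in X s -> w \in X s' -> s = s'.
Proof.
move=> Hs Hs' H1 H2; case: (eqVneq s s') => // Hne.
by have := disj_all Hs Hs' Hne; move/disjP => /(_ w H1 H2).
Qed.

Lemma X_inj : {in St &, injective X}.
Proof. move=> s s' Hs Hs' E; apply: (X_uniq Hs Hs' (X_self Hs)); rewrite -E; exact: X_self Hs. Qed.

Local Notation fam := (Defs.family St X).
Local Notation rest := (rest par v St X).
Local Notation cmp := (Defs.comp par v St X).
Local Notation odds := (oddsets par v St X c).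

Lemma restX x : x \in Ve -> x \notin rest -> exists2 s, s \in St & x \in X s.
Proof.
move=> Hx Hr; have : x \in \bigcup_(Y in fam) Y.
  by apply: contraR Hr => H; rewrite /Defs.rest in_setD H Hx.
by case/bigcupP => Y /imsetP [s Hs ->] H; exists s.
Qed.

Lemma rest_notX x s : x \in rest -> s \in St -> x \notin X s.
Proof. by case/restP => _ H /H. Qed.

Lemma res_top s z : s \in St -> z \in Ee -> z \in X s -> par z \notin X s -> c z - f z = 0.
Proof.
rewrite StE => /orP [/eqP->|Ht] HzE Hz Hpz.
  by move: Hpz; rewrite (Xu_par Hz HzE).
apply/eqP; rewrite subn_eq0; have := Vf_top (Ee_Ve (Te_Ee Ht)) HzE Hz Hpz.
by rewrite addn1 -ltnNge ltnS.
Qed.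

Lemma res_le1 s z : s \in St -> z \in Ee -> par z \in X s -> z \notin X s -> c z - f z <= 1.
Proof.
move=> Hs HzE Hpz Hz; rewrite leqNgt; apply/negP => H; move/negP: Hz; apply.
apply: Vf_ext (St_Ve Hs) HzE Hpz _.
by rewrite addn2 -subn_gt0 subnS -subn1 subn_gt0.
Qed.

Lemma adjE_par z : z \in Ee -> adjE par v (par z) z.
Proof. by move=> H; rewrite /adjE H eqxx. Qed.
Lemma adjE_par' z : z \in Ee -> adjE par v z (par z).
Proof. by move=> H; rewrite /adjE H eqxx orbT. Qed.

Lemma cmp_rest_both w z : w \in rest -> z \in Ee -> z \in rest -> par z \in rest ->
  (z \in cmp w) = (par z \in cmp w).
Proof.
move=> Hw HzE Hz Hpz; apply/idP/idP => H.
  rewrite -(comp_eq H); exact: comp_adj Hz Hpz (adjE_par' HzE).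
rewrite -(comp_eq H); exact: comp_adj Hpz Hz (adjE_par HzE).
Qed.

Lemma comp_bnd_pos w z : w \in rest -> z \in Ee -> bnd (cmp w) z -> 0 < c z - f z ->
  [/\ z \in cmp w, par z \notin cmp w & c z - f z <= 1].
Proof.
move=> Hw HzE Hb Hres.
have HzVe := Ee_Ve HzE; have HpVe := Ee_par HzE.
move: Hb; rewrite /bnd; case Hpz: (par z \in cmp w); case Hz: (z \in cmp w) => //= _.
  have Hpr := comp_rest Hw Hpz.
  case Hzr: (z \in rest).
    by move: Hz; rewrite (cmp_rest_both Hw HzE Hzr Hpr) Hpz.
  case: (restX HzVe (negbT Hzr)) => s Hs Hzs.
  by move: Hres; rewrite (res_top Hs HzE Hzs (rest_notX Hpr Hs)).
have Hzr := comp_rest Hw Hz.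
split => //.
case Hpr: (par z \in rest).
  by move: Hpz; rewrite -(cmp_rest_both Hw HzE Hzr Hpr) Hz.
case: (restX HpVe (negbT Hpr)) => s Hs Hps.
exact: res_le1 Hs HzE Hps (rest_notX Hzr Hs).
Qed.

Lemma cutE_res_le1 w : w \in rest -> cutE par v (cmp w) (fun z => c z - f z) <= 1.
Proof.
move=> Hw; rewrite /cutE.
case: (pickP (fun z => [&& z \in Ee, bnd (cmp w) z & 0 < c z - f z])) => [z1 /and3P [H1 H2 H3]|none].
  rewrite (bigD1 z1) /=; last by rewrite H1.
  have [A1 B1 C1] := comp_bnd_pos Hw H1 H2 H3.
  rewrite big1 ?addn0 // => z /andP [/andP [HzE Hb] Hne].
  case: (posnP (c z - f z)) => // Hp.
  have [A2 B2 _] := comp_bnd_pos Hw HzE Hb Hp.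
  by rewrite (comp_top_uniq A2 B2 A1 B1) eqxx in Hne.
rewrite big1 // => z /andP [HzE Hb].
have := none z; rewrite HzE /=.
case: (posnP (c z - f z)) => // Hp /negbT/negP; case; apply/andP; split => //.
Qed.

Lemma cutE_split (Y : {set V}) : cutE par v Y c = cutE par v Y f + cutE par v Y (fun z => c z - f z).
Proof.
rewrite /cutE -big_split /=; apply: eq_bigr => z /andP [HzE _].
by rewrite subnKC // f_le_c.
Qed.

Lemma cmp_noSt w s : w \in rest -> s \in St -> s \notin cmp w.
Proof.
move=> Hw Hs; apply/negP => H; have := rest_notX (comp_rest Hw H) Hs.
by rewrite X_self.
Qed.

Lemma W_even f' w : is_flow par v T f' -> w \in rest -> ~~ odd (cutE par v (cmp w) f').
Proof.
case=> g Hg Hw; apply: (cutE_even Hg) => s Hs; exact: cmp_noSt.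
Qed.

Lemma oddsP W : W \in odds -> exists2 w, w \in rest & W = cmp w /\ odd (cutE par v W c).
Proof.
rewrite /oddsets in_set => /andP [/imsetP [w Hw ->] Ho].
by exists w.
Qed.

Lemma W_res1 W : W \in odds -> cutE par v W (fun z => c z - f z) = 1.
Proof.
case/oddsP => w Hw [E Ho]; subst W.
have Hle := cutE_res_le1 Hw.
have Hev : ~~ odd (cutE par v (cmp w) f) by apply: W_even Hw; case: feas.
move: Ho; rewrite cutE_split oddD (negbTE Hev) /=.
by case: (cutE par v (cmp w) _) Hle => [|[|]].
Qed.

Lemma mm_idx z : \sum_(Y in fam) (bnd Y z : nat) = \sum_(s in St) (bnd (X s) z : nat).
Proof. by rewrite /Defs.family big_imset //; exact: X_inj. Qed.

Lemma odds_in W x : W \in odds -> x \in W -> x \in rest /\ W = cmp x.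
Proof.
case/oddsP => w Hw [E _]; subst W => Hx; split; first exact: comp_rest Hw Hx.
by rewrite (comp_eq Hx).
Qed.

Lemma odds_bnd W z : W \in odds -> z \in Ee -> bnd W z ->
  [/\ z \in rest, par z \notin rest & W = cmp z] \/
  [/\ z \notin rest, par z \in rest & W = cmp (par z)].
Proof.
move=> HW HzE; rewrite /bnd.
case Hpz: (par z \in W); case Hz: (z \in W) => //= _.
  have [Hpr E] := odds_in HW Hpz.
  case Hzr: (z \in rest); last by right.
  by move: Hz; rewrite E (comp_adj Hpr Hzr (adjE_par HzE)).
have [Hzr E] := odds_in HW Hz.
case Hpr: (par z \in rest); last by left.
by move: Hpz; rewrite E (comp_adj Hzr Hpr (adjE_par' HzE)).
Qed.

Lemma odds_uniq z W1 W2 : z \in Ee -> W1 \in odds -> bnd W1 z -> W2 \in odds -> bnd W2 z -> W1 = W2.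
Proof.
move=> HzE H1 B1 H2 B2.
case: (odds_bnd H1 HzE B1) => [[A1 A2 ->]|[A1 A2 ->]];
case: (odds_bnd H2 HzE B2) => [[C1 C2 ->]|[C1 C2 ->]] //.
- by rewrite C2 in A2.
- by rewrite C1 in A1.
Qed.

Lemma bnd_end W z : W \in odds -> z \in Ee -> bnd W z -> exists2 s, s \in St & bnd (X s) z.
Proof.
move=> HW HzE Hb; case: (odds_bnd HW HzE Hb) => [[A1 A2 _]|[A1 A2 _]].
  case: (restX (Ee_par HzE) A2) => s Hs Hps; exists s => //.
  by rewrite /bnd Hps (negbTE (rest_notX A1 Hs)).
case: (restX (Ee_Ve HzE) A1) => s Hs Hzs; exists s => //.
by rewrite /bnd Hzs (negbTE (rest_notX A2 Hs)).
Qed.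

Lemma k_le_m z : z \in Ee -> \sum_(W in odds) (bnd W z : nat) <= \sum_(Y in fam) (bnd Y z : nat).
Proof.
move=> HzE; case: (pickP (fun W => (W \in odds) && bnd W z)) => [W /andP [HW Hb]|none]; last first.
  by rewrite sumb_eq0 // => W HW; have := none W; rewrite HW /= => ->.
apply: (@leq_trans 1).
  apply: sumb_le1 => W1 W2 A1 B1 A2 B2; exact: odds_uniq HzE A1 B1 A2 B2.
case: (bnd_end HW HzE Hb) => s Hs Hbs.
rewrite mm_idx; exact: sumb_ge1 Hs Hbs.
Qed.

Lemma cmp_odd z : z \in Ee -> z \in rest -> par z \notin rest -> 0 < c z - f z -> cmp z \in odds.
Proof.
move=> HzE Hzr Hpr Hp.
have Hb : bnd (cmp z) z.
  rewrite /bnd comp_self; case H: (par z \in cmp z) => //.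
  by move: Hpr; rewrite (comp_rest Hzr H).
have H1 : cutE par v (cmp z) (fun z => c z - f z) = 1.
  apply/eqP; rewrite eqn_leq cutE_res_le1 //=.
  rewrite /cutE (bigD1 z) /=; last by rewrite HzE.
  exact: leq_trans Hp (leq_addr _ _).
rewrite /oddsets in_set; apply/andP; split; first by apply/imsetP; exists z.
have Hev : ~~ odd (cutE par v (cmp z) f) by apply: W_even Hzr; case: feas.
by rewrite cutE_split oddD H1 (negbTE Hev).
Qed.

Lemma P2 z : z \in Ee -> (c z - f z) * \sum_(Y in fam) (bnd Y z : nat) =
                          (c z - f z) * \sum_(W in odds) (bnd W z : nat).
Proof.
move=> HzE; case: (posnP (c z - f z)) => [->|Hp]; first by rewrite !mul0n.
congr (_ * _); rewrite mm_idx.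
have HzVe := Ee_Ve HzE; have HpVe := Ee_par HzE.
case Hzr: (z \in rest).
  case Hpr: (par z \in rest).
    rewrite !sumb_eq0 // => [W HW|s Hs].
      apply/negP => Hb; case: (odds_bnd HW HzE Hb) => [[_ A _]|[A _ _]].
        by rewrite Hpr in A.
      by rewrite Hzr in A.
    by rewrite /bnd (negbTE (rest_notX Hzr Hs)) (negbTE (rest_notX Hpr Hs)).
  case: (restX HpVe (negbT Hpr)) => s0 Hs0 Hps0.
  rewrite (@sumb_eq1 _ _ _ s0) //; last 2 first.
  - by rewrite /bnd Hps0 (negbTE (rest_notX Hzr Hs0)).
  - move=> s Hs; rewrite /bnd (negbTE (rest_notX Hzr Hs)) addbF => Hps.
    exact: X_uniq Hs Hs0 Hps Hps0.
  have HO := cmp_odd HzE Hzr (negbT Hpr) Hp.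
  rewrite (@sumb_eq1 _ _ _ (cmp z)) //.
    rewrite /bnd comp_self; case H: (par z \in cmp z) => //.
    by move: Hpr; rewrite (comp_rest Hzr H).
  move=> W HW Hb; apply: (odds_uniq HzE HW Hb HO).
  rewrite /bnd comp_self; case H: (par z \in cmp z) => //.
  by move: Hpr; rewrite (comp_rest Hzr H).
case: (restX HzVe (negbT Hzr)) => s0 Hs0 Hzs0.
have Hps0 : par z \in X s0.
  case H: (par z \in X s0) => //; move: Hp; by rewrite (res_top Hs0 HzE Hzs0 (negbT H)).
have Hpr : par z \notin rest.
  by apply/negP => H; move: Hps0; rewrite (negbTE (rest_notX H Hs0)).
rewrite !sumb_eq0 // => [W HW|s Hs].
  apply/negP => Hb; case: (odds_bnd HW HzE Hb) => [[A _ _]|[_ A _]].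
    by rewrite Hzr in A.
  by rewrite A in Hpr.
rewrite /bnd; case Hzs: (z \in X s).
  by rewrite (X_uniq Hs Hs0 Hzs Hzs0) Hps0.
case Hpzs: (par z \in X s) => //.
by move: Hzs; rewrite (X_uniq Hs Hs0 Hpzs Hps0) Hzs0.
Qed.

Lemma cutE_split' f' (Y : {set V}) : (forall z, z \in Ee -> f' z <= c z) ->
  cutE par v Y c = cutE par v Y f' + cutE par v Y (fun z => c z - f' z).
Proof.
move=> H; rewrite /cutE -big_split /=; apply: eq_bigr => z /andP [HzE _].
by rewrite subnKC // H.
Qed.

Lemma gamma_eq : gamma par v St X c = \sum_(Y in fam) cutE par v Y f + kappa par v St X c.
Proof.
rewrite /gamma /kappa -sum1_card.
have -> : \sum_(W in odds) 1 = \sum_(W in odds) cutE par v W (fun z => c z - f z).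
  by apply: eq_bigr => W HW; rewrite W_res1.
rewrite !cutE_exch -big_split /=; apply: eq_bigr => z HzE.
by rewrite -P2 // -mulnDl subnKC // f_le_c.
Qed.

Lemma gamma_ge f' : feasible par v T c f' ->
  \sum_(Y in fam) cutE par v Y f' + kappa par v St X c <= gamma par v St X c.
Proof.
case=> Hflow Hle.
rewrite /gamma /kappa -sum1_card.
apply: (@leq_trans (\sum_(Y in fam) cutE par v Y f' + \sum_(W in odds) cutE par v W (fun z => c z - f' z))).
  rewrite leq_add2l; apply: leq_sum => W HW.
  case/oddsP: (HW) => w Hw [E Ho].
  have Hev := W_even Hflow Hw; rewrite -E in Hev.
  move: Ho; rewrite (cutE_split' W Hle) oddD (negbTE Hev) /=.
  by case: (cutE par v W _).
rewrite !cutE_exch -big_split /=; apply: leq_sum => z HzE.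
rewrite -{2}(subnKC (Hle z HzE)) mulnDl leq_add2l.
apply: leq_mul => //; exact: k_le_m.
Qed.

Lemma inX_St a s : a \in St -> s \in St -> (a \in X s) = (a \in [set s]).
Proof.
move=> Ha Hs; rewrite in_set1; apply/idP/eqP => [H|->]; last exact: X_self.
exact: esym (X_uniq Hs Ha H (X_self Ha)).
Qed.

Lemma alpha_le f' : is_flow par v T f' -> alpha2 par v T f' <= \sum_(Y in fam) cutE par v Y f'.
Proof.
case=> g Hg; rewrite /alpha2 /Defs.family big_imset /=; last exact: X_inj.
apply: leq_sum => s Hs; rewrite !(cutE_flow Hg); apply: leq_sum => P HP.
rewrite leq_mul2l; apply/orP; right.
have E1 : cross P [set s] = onP P (es s) := cutE1 Hst (fun z => onP P z : nat) Hs.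
rewrite E1; case H1: (onP P (es s)) => //=.
case/pairPE: HP => a [b [Ha Hb Hab EP]].
have : odd (cross P (X s)).
  rewrite EP (cross_odd _ (St_Ve Ha) (St_Ve Hb)) (inX_St Ha Hs) (inX_St Hb Hs).
  by rewrite -(cross_odd _ (St_Ve Ha) (St_Ve Hb)) -EP E1 H1.
by case: (cross P (X s)).
Qed.

Lemma sum_ind (q : pred {set V}) P0 :
  \sum_(P | q P) (P == P0 : nat) = q P0.
Proof.
case Hq: (q P0).
  by apply: (@sumb_eq1 _ _ _ P0) => // P _ /eqP.
by apply: sumb_eq0 => P HP; apply/negP => /eqP E; rewrite -E HP in Hq.
Qed.

Lemma Q_pair x y z : x \in St -> y \in St -> x != y ->
  [&& [set x; y] \subset St, #|[set x; y]| == 2 &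
      [exists s in [set x; y], exists s' in [set x; y], on_path s s' z]] = on_path x y z.
Proof.
move=> Hx Hy Hxy; rewrite cards2 Hxy /=.
have -> : [set x; y] \subset St.
  by apply/subsetP => w; rewrite in_set2 => /orP [] /eqP ->.
exact: onP_pair.
Qed.

Section Aug.
Variable g : {set V} -> nat.
Hypothesis Hg : forall z, z \in Ee ->
    f z = \sum_(P : {set V} | [&& P \subset St, #|P| == 2 &
                 [exists s in P, exists s' in P, on_path s s' z]]) g P.
Hypothesis Hmax : forall f' : V -> nat, blocking par r v T c f' -> f' v <= f v.
Variables a b z0 : V.
Hypothesis Ha : a \in Te.
Hypothesis Hb : b \in Te.
Hypothesis Hab : a != b.
Hypothesis Hgab : 0 < g [set a; b].
Hypothesis Hz0 : z0 \in Ee.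
Hypothesis Hpz0 : par z0 \in X u.
Hypothesis Hz0a : anc z0 a.
Hypothesis Hz0b : ~~ anc z0 b.

Let chg z := [&& z \in Ee, anc z a & anc z b].
Let f2 z := if chg z then f z + 2 else f z.
Let g2 P := g P - (P == [set a; b]) + (P == [set u; a]) + (P == [set u; b]).

Lemma chg_prop z : chg z -> [/\ z \in X u, par z \in X u & f z + 2 <= c z].
Proof.
case/and3P => HzE Hza Hzb.
have Hzp : anc z (par z0).
  case/orP: (anc_total Hza Hz0a) => H.
    case/anc_cases: H => [E|//]; by move: Hz0b; rewrite -E Hzb.
  by move: Hz0b; rewrite (anc_trans H Hzb).
have HzX : z \in X u := Xu_anc Hpz0 (Ee_Ve HzE) Hzp.
split => //; first exact: Xu_par.
by case/Vf_u: Hpz0 => _; apply => //; exact: Ee_nanc_u.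
Qed.

Lemma f2_eq z : z \notin X u -> f2 z = f z.
Proof.
rewrite /f2; case H: (chg z) => // Hz.
by case: (chg_prop H) => H1 _ _; rewrite H1 in Hz.
Qed.

Lemma f2_eq' z : par z \notin X u -> f2 z = f z.
Proof.
rewrite /f2; case H: (chg z) => // Hz.
by case: (chg_prop H) => _ H1 _; rewrite H1 in Hz.
Qed.

Lemma f_le_f2 z : f z <= f2 z.
Proof. by rewrite /f2; case: (chg z) => //; rewrite leq_addr. Qed.

Lemma u_ne x : x \in Te -> u != x.
Proof. by move=> Hx; apply/eqP => E; move: (u_Te T); rewrite E Hx. Qed.

Lemma StTe x : x \in Te -> x \in St.
Proof. by move=> Hx; rewrite StE Hx orbT. Qed.

Lemma u_St : u \in St.
Proof. by rewrite StE eqxx. Qed.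

Lemma f2_flow : is_flow par v T f2.
Proof.
exists g2 => z HzE.
set q := fun P : {set V} => [&& P \subset St, #|P| == 2 &
                 [exists s in P, exists s' in P, on_path s s' z]].
have Hne1 : [set a; b] != [set u; a].
  apply/negP => /eqP E; have : u \in [set a; b] by rewrite E !inE eqxx.
  by rewrite !inE => /orP [] /eqP E'; [move: (u_ne Ha)|move: (u_ne Hb)]; rewrite E' eqxx.
have Hne2 : [set a; b] != [set u; b].
  apply/negP => /eqP E; have : u \in [set a; b] by rewrite E !inE eqxx.
  by rewrite !inE => /orP [] /eqP E'; [move: (u_ne Ha)|move: (u_ne Hb)]; rewrite E' eqxx.
have E : \sum_(P | q P) g2 P + \sum_(P | q P) (P == [set a; b] : nat) =
         \sum_(P | q P) g P + \sum_(P | q P) (P == [set u; a] : nat) +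
         \sum_(P | q P) (P == [set u; b] : nat).
  rewrite -!big_split /=; apply: eq_bigr => P _; rewrite /g2.
  case: (eqVneq P [set a; b]) => [->|Hne].
    by rewrite (negbTE Hne1) (negbTE Hne2) /= !addn0 subnK.
  by rewrite subn0 addn0.
move: E; rewrite !sum_ind /q -Hg //.
rewrite !Q_pair ?u_St ?StTe ?u_ne //.
rewrite /f2 /chg HzE /= !onpE (negbTE (Ee_nanc_u HzE)) /=.
move: (xor_nat (anc z a) (anc z b)).
case: (anc z a); case: (anc z b) => /=; lia.
Qed.

Lemma f2_feas : feasible par v T c f2.
Proof.
split; first exact: f2_flow.
move=> z HzE; rewrite /f2; case H: (chg z); last exact: f_le_c.
by case: (chg_prop H).
Qed.

Lemma Vf2 t : t \in Te -> Vf par v c f2 t = X t.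
Proof.
move=> Ht; apply/setP => w; apply/idP/idP; first exact: Vf_mono f_le_f2.
apply: Vf_keep (Ee_Ve (Te_Ee Ht)) _ => z Hz; apply: f2_eq.
by apply/negP => H; have := disj_u Ht; move/disjP; apply; [exact: H|exact: Hz].
Qed.

Lemma f2_blocking : blocking par r v T c f2.
Proof.
have Efam : Defs.family Te (Vf par v c f2) = Defs.family Te X.
  by apply: eq_in_imset => t Ht; exact: Vf2.
case: Hblock => _ B2 B3 B4.
split.
- exact: f2_feas.
- by move=> t Ht; rewrite Vf2 //; exact: B2.
- by move=> t t' Ht Ht' Hne; rewrite !Vf2 //; exact: B3.
move=> t Ht; rewrite Vf2 //; case: (B4 t Ht) => E1 [B41 B42]; split => //.
have HtX : t \in X t := X_self (StTe Ht).
have Hnot : forall w, w \in X t -> w \notin X u.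
  by move=> w Hw; apply/negP => H; have := disj_u Ht; move/disjP; apply; [exact: H|exact: Hw].
have Ecut : cutE par v (X t) f2 = cutE par v (X t) f.
  apply: eq_bigr => z /andP [HzE Hb']; move: Hb'.
  case Hp: (par z \in X t); case Hz: (z \in X t) => //= _.
    exact: f2_eq' (Hnot _ Hp).
  exact: f2_eq (Hnot _ Hz).
split; first by rewrite Ecut f2_eq // Hnot.
by rewrite Ecut /Defs.oddX /Defs.oddsets /Defs.comp /Defs.rest Efam.
Qed.

Lemma aug_false : False.
Proof.
have := Hmax f2_blocking; rewrite /f2.
have -> : chg v.
  apply/and3P; split; first by rewrite EeE anc_refl.
    by rewrite -EeE; exact: Te_Ee Ha.
  by rewrite -EeE; exact: Te_Ee Hb.
lia.
Qed.

End Aug.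

Lemma bnd_Xu z : z \in Ee -> bnd (X u) z -> par z \in X u /\ z \notin X u.
Proof.
move=> HzE; rewrite /bnd; case Hz: (z \in X u); last by rewrite addbF.
by rewrite (Xu_par Hz HzE).
Qed.

Lemma cross_u t : t \in Te -> cross [set u; t] (X u) = cross [set u; t] [set u].
Proof.
move=> Ht.
have E1 : cross [set u; t] [set u] = 1.
  rewrite crossE (cutE1 Hst _ u_St) /es eqxx onP_pair onpE.
  by rewrite (negbTE (Ee_nanc_u v_Ee)) -EeE (Te_Ee Ht).
rewrite E1; apply/eqP; rewrite eqn_leq; apply/andP; split.
  apply: sumb_le1 => z1 z2 /andP [H1 B1] P1 /andP [H2 B2] P2.
  move: P1 P2; rewrite !onP_pair !onpE (negbTE (Ee_nanc_u H1)) (negbTE (Ee_nanc_u H2)) /= => A1 A2.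
  have [C1 D1] := bnd_Xu H1 B1; have [C2 D2] := bnd_Xu H2 B2.
  case/orP: (anc_total A1 A2) => H.
    case/anc_cases: H => [//|H].
    by move: D1; rewrite (Xu_anc C2 (Ee_Ve H1) H).
  case/anc_cases: H => [->//|H].
  by move: D2; rewrite (Xu_anc C1 (Ee_Ve H2) H).
have : odd (cross [set u; t] (X u)).
  rewrite (cross_odd _ u_Ve (Ee_Ve (Te_Ee Ht))) (inX_St u_St u_St) (inX_St (StTe Ht) u_St).
  by rewrite !in_set1 eqxx eq_sym (negbTE (u_ne Ht)).
by case: (cross _ _).
Qed.

Lemma eq_sym_ne (x y : V) : x != y -> y != x.
Proof. by rewrite eq_sym. Qed.

Section M6.
Hypothesis Hmax : forall f' : V -> nat, blocking par r v T c f' -> f' v <= f v.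

Lemma Xu_cut : cutE par v (X u) f = f v.
Proof.
case: feas => [[g Hg] _].
have -> : f v = cutE par v [set u] f by rewrite (cutE1 Hst f u_St) /es eqxx.
rewrite !(cutE_flow Hg); apply: eq_bigr => P HP.
case/pairPE: HP => x [y [Hx Hy Hxy EP]]; subst P.
case: (eqVneq x u) => [Ex|Hxu].
  subst x; rewrite cross_u //; move: Hy; rewrite StE eq_sym (negbTE Hxy) //.
case: (eqVneq y u) => [Ey|Hyu].
  subst y; rewrite setUC cross_u //; move: Hx; rewrite StE (negbTE Hxu) //.
have HxT : x \in Te by move: Hx; rewrite StE (negbTE Hxu).
have HyT : y \in Te by move: Hy; rewrite StE (negbTE Hyu).
have -> : cross [set x; y] [set u] = 0.
  rewrite crossE (cutE1 Hst _ u_St) /es eqxx onP_pair onpE.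
  by rewrite -!EeE (Te_Ee HxT) (Te_Ee HyT).
case: (posnP (g [set x; y])) => [->//|Hgp].
rewrite muln0; apply/eqP; rewrite muln_eq0; apply/orP; right; apply/eqP.
apply: sumb_eq0 => z /andP [HzE Hb]; apply/negP; rewrite onP_pair onpE.
have [C D] := bnd_Xu HzE Hb.
case Hzx: (anc z x); case Hzy: (anc z y) => //= _.
  exact: (aug_false Hg Hmax HxT HyT Hxy Hgp HzE C Hzx (negbT Hzy)).
rewrite setUC in Hgp.
exact: (aug_false Hg Hmax HyT HxT (eq_sym_ne Hxy) Hgp HzE C Hzy (negbT Hzx)).
Qed.

End M6.

End Main.

End Tree.

Unset Implicit Arguments.

Theorem lemma2 (V : finType) (par : V -> V) (r : V) (T : {set V})
  (c : V -> nat) (v : V) (f : V -> nat) :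
  is_rooted_tree par r ->
  standing par r T c ->
  r \in T ->
  v != r ->
  (* f is a blocking flow in I(e), e = (par v, v), with f(e) = max Psi(e) *)
  blocking par r v T c f ->
  (forall f' : V -> nat, blocking par r v T c f' -> f' v <= f v) ->
  [/\ (* cut-system *)
      forall t, t \in Sterm par v T -> tset par v T (Vf par v c f t) t,
      forall t t', t \in Sterm par v T -> t' \in Sterm par v T -> t != t' ->
        [disjoint Vf par v c f t & Vf par v c f t'],
      (* 2 alpha(f) = f(e) + sum_{t in T_e} f(e_t) *)
      alpha2 par v T f = f v + \sum_(t in Te par v T) f t,
      (* 2 alpha(f) = gamma(X) - kappa(X) *)
      alpha2 par v T f + kappa par v (Sterm par v T) (Vf par v c f) c
        = gamma par v (Sterm par v T) (Vf par v c f) c &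
      (* f is a maximum feasible flow in I(e) *)
      forall f' : V -> nat, feasible par v T c f' ->
        alpha2 par v T f' <= alpha2 par v T f].
Proof.
move=> Htree Hst HrT Hv Hblock Hmax.
have Halpha : forall h : V -> nat, alpha2 par v T h = h v + \sum_(t in Te par v T) h t.
  move=> h; rewrite /alpha2 /Sterm big_setU1 /=; last exact: (u_Te Htree Hv T).
  rewrite (cutE1 Htree Hv Hst) ?in_setU1 ?eqxx // /es eqxx; congr (_ + _).
  apply: eq_bigr => t Ht; rewrite (cutE1 Htree Hv Hst) ?in_setU1 ?Ht ?orbT // /es.
  case: (eqVneq t (par v)) => // E; by move: (u_Te Htree Hv T); rewrite -E Ht.
have Hsum : \sum_(Y in Defs.family (Sterm par v T) (Vf par v c f)) cutE par v Y f = alpha2 par v T f.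
  rewrite /Defs.family big_imset /=; last exact: (@X_inj _ _ _ Htree _ Hv _ _ _ Hblock).
  rewrite /Sterm big_setU1 /=; last exact: (u_Te Htree Hv T).
  rewrite (@Xu_cut _ _ _ Htree _ Hv _ _ _ Hst Hblock Hmax) Halpha; congr (_ + _).
  apply: eq_bigr => t Ht; case: Hblock => _ _ _ /(_ t Ht) [_ [E _]].
  by rewrite E.
split.
- exact: (@tset_all _ _ _ Htree _ Hv _ _ _ Hblock).
- exact: (@disj_all _ _ _ Htree _ Hv _ _ _ Hblock).
- exact: Halpha.
- by rewrite (@gamma_eq _ _ _ Htree _ Hv _ _ _ Hblock) Hsum.
move=> f' Hf'.
have H1 := @alpha_le _ _ _ Htree _ Hv _ _ _ Hst Hblock _ (proj1 Hf').
have H2 := @gamma_ge _ _ _ Htree _ Hv _ _ _ Hblock _ Hf'.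
rewrite (@gamma_eq _ _ _ Htree _ Hv _ _ _ Hblock) Hsum leq_add2r in H2.
exact: leq_trans H1 H2.
Qed.
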